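(* Let $b>2$ be an integer and let $G$ be a $b$-dc-semigroup. \begin{enumerate} \item The set $U_b=\{I_b(i,k): i\in\mathbf{N},\ k\in\mathbf{N}^*\}$, endowed with the operation $I_b(i,k)\cdot I_b(j,l)=I_b(i+j,k+l)$, is an abelian semigroup. \item If $i,j\in\mathbf{N}$, $k,l\in\mathbf{N}^*$, $I_b(i,k)\subseteq G$ and $I_b(j,l)\subseteq G$, then $I_b(i,k)\cdot I_b(j,l)=I_b(i+j,k+l)\subseteq G$. \end{enumerate}
   Context: $\mathbf{N}=\{0,1,2,\dots\}$ and $\mathbf{N}^*=\mathbf{N}\setminus\{0\}$. Fix an integer base $b\ge 2$. A $b$-dc-semigroup is a subsemigroup $G$ of the multiplicative semigroup $(\mathbf{N}^*,\cdot)$ which is closed with respect to the number of digits in base $b$: whenever $x\in G$ has a base-$b$ representation with exactly $n$ digits (leading digit nonzero), every positive integer whose base-$b$ representation has exactly $n$ digits also lies in $G$; equivalently, if $x\in G$ and $b^{n-1}\le x<b^n$ then $\{y\in\mathbf{N}: b^{n-1}\le y<b^n\}\subseteq G$. For $i\in\mathbf{N}$ and $j\in\mathbf{N}^*$, $I_b(i,j)=\{x\in\mathbf{N}: b^i\le x<b^{i+j}\}$ and $I_b(i,+\infty)=\{x\in\mathbf{N}: x\ge b^i\}$. *)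

(* Defs.v *)
From mathcomp Require Import all_boot.
Set Implicit Arguments. Unset Strict Implicit. Unset Printing Implicit Defensive.

Definition Ib (b i j : nat) : pred nat := fun x => (b ^ i <= x) && (x < b ^ (i + j)).

(* A b-dc-semigroup: a subsemigroup of the multiplicative semigroup N^* closed w.r.t. number of base-b digits.
   x has exactly n+1 digits iff b^n <= x < b^(n+1). *)
Definition dc_semigroup (b : nat) (G : pred nat) : Prop :=
  [/\ (forall x, G x -> 0 < x),
      (forall x y, G x -> G y -> G (x * y)) &
      (forall x n, G x -> b ^ n <= x < b ^ n.+1 ->
         forall y, b ^ n <= y < b ^ n.+1 -> G y)].

(* Main.v *)
Require Import Defs.
From mathcomp Require Import all_boot.
From mathcomp Require Import zify.

Lemma Ib_pow b i k m : 1 < b -> (b ^ m \in Ib b i k) = (i <= m < i + k).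
Proof. by move=> b1; rewrite unfold_in /Ib /= leq_exp2l // ltn_exp2l. Qed.

Lemma Ib_inj b i k i' k' : 1 < b -> 0 < k -> 0 < k' ->
  Ib b i k =i Ib b i' k' -> i = i' /\ k = k'.
Proof.
move=> b1 k0 k'0 H.
have E m : (i <= m < i + k) = (i' <= m < i' + k').
  by rewrite -(Ib_pow b i k m b1) -(Ib_pow b i' k' m b1) H.
have := E i; have := E i'; have := E (i + k); have := E (i' + k').
lia.
Qed.

Lemma digits b x : 1 < b -> 0 < x ->
  b ^ trunc_log b x <= x < b ^ (trunc_log b x).+1.
Proof. by move=> b1 x0; rewrite trunc_logP // trunc_log_ltn. Qed.

Theorem lemma2p1 (b : nat) (G : pred nat) :
  2 < b -> dc_semigroup b G ->
  (* (1) U_b with I_b(i,k).I_b(j,l) = I_b(i+j,k+l) is an abelian semigroup: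
         the operation is well defined on the sets, commutative and associative *)
  ((forall i k j l i' k' j' l',
      0 < k -> 0 < l -> 0 < k' -> 0 < l' ->
      Ib b i k =i Ib b i' k' -> Ib b j l =i Ib b j' l' ->
      Ib b (i + j) (k + l) =i Ib b (i' + j') (k' + l'))
   /\ (forall i k j l, 0 < k -> 0 < l ->
      Ib b (i + j) (k + l) =i Ib b (j + i) (l + k))
   /\ (forall i k j l m n, 0 < k -> 0 < l -> 0 < n ->
      Ib b ((i + j) + m) ((k + l) + n) =i Ib b (i + (j + m)) (k + (l + n))))
  /\
  (* (2) closure of G *)
  (forall i k j l, 0 < k -> 0 < l ->
      {subset Ib b i k <= G} -> {subset Ib b j l <= G} ->
      {subset Ib b (i + j) (k + l) <= G}).
Proof.
move=> b2 [Gpos GM Gd]; have b1 : 1 < b by apply: ltnW.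
split; first split.
- move=> i k j l i' k' j' l' k0 l0 k'0 l'0 H1 H2.
  have [-> ->] := Ib_inj _ _ _ _ _ b1 k0 k'0 H1.
  by have [-> ->] := Ib_inj _ _ _ _ _ b1 l0 l'0 H2.
- split; first by move=> i k j l _ _ x; rewrite (addnC i) (addnC k).
  by move=> i k j l m n _ _ _ x; rewrite !addnA.
move=> i k j l k0 l0 Hi Hj x.
rewrite unfold_in /Ib /= => /andP [xl xu].
have x0 : 0 < x by apply: leq_trans xl; rewrite expn_gt0 ltnW.
have [dl du] := andP (digits _ _ b1 x0).
set n := trunc_log b x in dl du.
have nl : i + j <= n.
  by rewrite -ltnS -(ltn_exp2l _ _ b1); apply: leq_ltn_trans xl du.
have nu : n < i + j + (k + l).
  by rewrite -(ltn_exp2l _ _ b1); apply: leq_ltn_trans dl xu.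
have Gx y : G y -> b ^ n <= y < b ^ n.+1 -> G x.
  by move=> Gy yb; apply: (Gd y n Gy yb); rewrite dl du.
case: (ltnP n.+1 (i + j + (k + l))) => hn.
  pose p := if n - j <= (i + k).-1 then n - j else (i + k).-1.
  have hp : i <= p < i + k by rewrite /p; case: ifP => ?; lia.
  have hpn : p <= n by rewrite /p; case: ifP => ?; lia.
  have hq : j <= n - p < j + l by rewrite /p; case: ifP => ?; lia.
  have Gy : G (b ^ p * b ^ (n - p)).
    by apply: GM; [apply: Hi | apply: Hj]; rewrite Ib_pow.
  apply: (Gx _ Gy).
  have -> : b ^ p * b ^ (n - p) = b ^ n by rewrite -expnD; congr (_ ^ _); lia.
  by apply/andP; split => //; rewrite ltn_exp2l.
have en : n = ((i + k).-1 + (j + l).-1).+1 by lia.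
set P := (i + k).-1; set Q := (j + l).-1.
have eP : b ^ (i + k) = b * b ^ P by rewrite -expnS /P; congr (_ ^ _); lia.
have eQ : b ^ (j + l) = b * b ^ Q by rewrite -expnS /Q; congr (_ ^ _); lia.
have iP : b ^ i <= b ^ P by rewrite leq_exp2l // /P; lia.
have jQ : b ^ j <= b ^ Q by rewrite leq_exp2l // /Q; lia.
have pP : 0 < b ^ P by rewrite expn_gt0 ltnW.
have pQ : 0 < b ^ Q by rewrite expn_gt0 ltnW.
apply: (Gx ((b - 1) * b ^ P * ((b - 1) * b ^ Q))).
  apply: GM; [apply: Hi | apply: Hj]; rewrite unfold_in /Ib /= ?eP ?eQ;
    apply/andP; split; nia.
rewrite en !expnS expnD -/P -/Q.
have hb : b <= (b - 1) * (b - 1) by nia.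
move: pP pQ hb b2; generalize (b ^ P) (b ^ Q) => X Y hX hY hb hb2.
have -> : (b - 1) * X * ((b - 1) * Y) = ((b - 1) * (b - 1)) * (X * Y).
  by rewrite mulnA (mulnC _ (b - 1)) !mulnA.
apply/andP; split; first by rewrite leq_mul2r hb orbT.
rewrite [b * (b * _)]mulnA ltn_mul2r muln_gt0 hX hY /=.
by apply: ltn_mul; lia.
Qed.
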